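(* Let $f=l+r\colon\mathbb{R}^d\to\mathbb{R}\cup\{+\infty\}$ be $\rho$-weakly convex and let $\{f_x=l_x+r\}_{x\in\mathbb{R}^d}$ be a one-sided model family with $\tau=0$ and Lipschitz constant $L$. Let $0<\mu<\rho^{-1}$, fix $a,b>0$, $x_0\in\mathbb{R}^d$, $\theta_k=\frac{\mu^{-1}-\rho}{2}(k+1)$, and define for $k=0,1,\dots,K$ $$x_{k+1}=\operatorname{argmin}_{x\in\mathbb{R}^d}\Big\{f_{x_k}(x)+\frac{1+\theta_k\mu}{2\mu}\Big\|x-\frac{x_0+\theta_k\mu x_k}{1+\theta_k\mu}\Big\|^2\Big\},\qquad \bar x_K=\frac{2}{(K+2)(K+3)-2}\sum_{k=1}^{K+1}(k+1)x_k.$$ If $K\ge\frac4a+\frac{16L^2}{(1-\mu\rho)^2b^2}$, then $$\|\bar x_K-\mathrm{prox}_{\mu f}(x_0)\|\le a\|x_0-\mathrm{prox}_{\mu f}(x_0)\|+\mu b.$$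
   Context: One-sided model family: $f=l+r$ with $r\colon\mathbb{R}^d\to\mathbb{R}\cup\{+\infty\}$ closed and $l\colon\mathbb{R}^d\to\mathbb{R}$ locally Lipschitz; for each $x\in\mathbb{R}^d$ a function $l_x\colon\mathbb{R}^d\to\mathbb{R}$ is given which is $L$-Lipschitz on $\mathrm{dom}\,r$, satisfies $l_x(x)=l(x)$ and $l_x(y)-l(y)\le\tau\|y-x\|^2$ for all $y$, and such that $f_x:=l_x+r$ is $\rho$-weakly convex (i.e. $f_x+\frac\rho2\|\cdot\|^2$ is convex). $\mathrm{prox}_{\mu f}(x)=\operatorname{argmin}_y\{f(y)+\frac1{2\mu}\|y-x\|^2\}$. *)

(* Defs.v *)
(* R : realType, R^d rendered as row vectors 'rV[R]_d,
   R ∪ {+oo}-valued functions rendered as \bar R-valued functions that never take -oo. *)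
From HB Require Import structures.
From mathcomp Require Import all_boot all_order all_algebra.
From mathcomp Require Import all_classical all_reals.
Set Implicit Arguments. Unset Strict Implicit. Unset Printing Implicit Defensive.
Import Order.TTheory GRing.Theory Num.Theory.
Local Open Scope ring_scope.
Local Open Scope ereal_scope.

Section Defs.
Variables (R : realType) (d : nat).
Local Notation V := 'rV[R]_d.

Definition edot (u v : V) : R := (\sum_(i < d) u ord0 i * v ord0 i)%R.
Definition enorm (u : V) : R := Num.sqrt (edot u u).

Definition edom (g : V -> \bar R) : set V := [set x | g x < +oo].

Definition never_minfty (g : V -> \bar R) : Prop := forall x, -oo < g x.

Definition proper_fun (g : V -> \bar R) : Prop :=
  never_minfty g /\ exists x, g x < +oo.

Definition closed_fun (g : V -> \bar R) : Prop :=
  forall (alpha : R) (x : V),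
    (forall eps : R, (0 < eps)%R ->
       exists y : V, (enorm (y - x) < eps)%R /\ g y <= alpha%:E) ->
    g x <= alpha%:E.

Definition econvex (g : V -> \bar R) : Prop :=
  forall (x y : V) (t : R), (0 <= t <= 1)%R ->
    g (t *: x + (1 - t) *: y)%R <= t%:E * g x + (1 - t)%:E * g y.

Definition weakly_convex (rho : R) (g : V -> \bar R) : Prop :=
  econvex (fun z => g z + (rho / 2 * enorm z ^+ 2)%:E).

Definition locally_lipschitz (l : V -> R) : Prop :=
  forall x : V, exists delta C : R, (0 < delta)%R /\
    forall y z, (enorm (y - x) < delta)%R -> (enorm (z - x) < delta)%R ->
      (`|l y - l z| <= C * enorm (y - z))%R.

Definition lipschitz_on (L : R) (S : set V) (h : V -> R) : Prop :=
  forall y z, S y -> S z -> (`|h y - h z| <= L * enorm (y - z))%R.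

Definition addfe (l : V -> R) (r : V -> \bar R) : V -> \bar R :=
  fun y => (l y)%:E + r y.

(* One-sided model family {f_x = lm x + r} for f = l + r with constants
   tau, L, rho (lm x y stands for l_x(y)) *)
Definition one_sided_model (l : V -> R) (r : V -> \bar R) (lm : V -> V -> R)
    (tau L rho : R) : Prop :=
  closed_fun r /\ locally_lipschitz l /\
  forall x : V,
    lipschitz_on L (edom r) (lm x) /\
    lm x x = l x /\
    (forall y, (lm x y - l y <= tau * enorm (y - x) ^+ 2)%R) /\
    weakly_convex rho (addfe (lm x) r).

Definition is_argmin (g : V -> \bar R) (y : V) : Prop :=
  forall z, g y <= g z.

Definition is_prox (mu : R) (f : V -> \bar R) (x p : V) : Prop :=
  is_argmin (fun y => f y + (1 / (2 * mu) * enorm (y - x) ^+ 2)%:E) p.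

End Defs.

(* Main.v *)
Require Import Defs.
From HB Require Import structures.
From mathcomp Require Import all_boot all_order all_algebra.
From mathcomp Require Import all_classical all_reals.
From mathcomp Require Import ring lra.
Import Order.TTheory GRing.Theory Num.Theory.
Local Open Scope ring_scope.

Section Helpers.
Variables (R : realType) (d : nat).
Local Notation V := 'rV[R]_d.

Lemma edot_ge0 (u : V) : 0 <= edot u u.
Proof. by rewrite /edot; apply: sumr_ge0 => i _; rewrite -expr2 sqr_ge0. Qed.

Lemma enorm_sq (u : V) : enorm u ^+ 2 = edot u u.
Proof. by rewrite /enorm sqr_sqrtr // edot_ge0. Qed.

Lemma enorm_ge0 (u : V) : 0 <= enorm u.
Proof. exact: sqrtr_ge0. Qed.

Lemma edot_opp (y z : V) : edot (y - z) (y - z) = edot (z - y) (z - y).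
Proof. by rewrite /edot; apply: eq_bigr => i _; rewrite !mxE; ring. Qed.

Lemma enormB (y z : V) : enorm (y - z) = enorm (z - y).
Proof. by rewrite /enorm edot_opp. Qed.

Lemma conv_id (t : R) (z y c : V) :
  edot (t *: z + (1 - t) *: y - c) (t *: z + (1 - t) *: y - c) =
  t * edot (z - c) (z - c) + (1 - t) * edot (y - c) (y - c)
  - t * (1 - t) * edot (z - y) (z - y).
Proof.
rewrite /edot !mulr_sumr -!big_split /= -sumrB; apply: eq_bigr => i _.
rewrite !mxE; ring.
Qed.

Lemma quad_split (m s : R) (y x0 xk : V) : m != 0 -> 1 + s != 0 ->
  (1 + s) / (2 * m) * edot (y - (1 + s)^-1 *: (x0 + s *: xk))
                         (y - (1 + s)^-1 *: (x0 + s *: xk)) =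
  1 / (2 * m) * edot (y - x0) (y - x0) + s / (2 * m) * edot (y - xk) (y - xk)
  - s / (2 * m * (1 + s)) * edot (x0 - xk) (x0 - xk).
Proof.
move=> hm hs.
rewrite /edot !mulr_sumr -!big_split /= -sumrB; apply: eq_bigr => i _.
rewrite !mxE; field.
by rewrite hs hm.
Qed.


Lemma conv_id0 (t : R) (z y : V) :
  edot (t *: z + (1 - t) *: y) (t *: z + (1 - t) *: y) =
  t * edot z z + (1 - t) * edot y y - t * (1 - t) * edot (z - y) (z - y).
Proof. by have := conv_id t z y 0; rewrite !subr0. Qed.

Lemma lim_arg (P X : R) :
  (forall t, 0 < t -> t < 1 -> (1 - t) * P <= X) -> P <= X.
Proof.
move=> H.
have H2 := H (1/2) ltac:(lra) ltac:(lra).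
have [P0|P0] := lerP P 0; first lra.
rewrite leNgt; apply/negP => XP.
have := H ((P - X) / (2 * P)).
have h1 : 0 < (P - X) / (2 * P) by apply: divr_gt0; lra.
have h2 : (P - X) / (2 * P) < 1.
  by rewrite ltr_pdivrMr; lra.
move=> /(_ h1 h2).
have -> : (1 - (P - X) / (2 * P)) * P = (P + X) / 2.
  by field; rewrite gt_eqF.
lra.
Qed.

Local Open Scope ereal_scope.

Lemma sc_min (g : V -> \bar R) (rho q : R) (c ys z : V) :
  (forall y, -oo < g y) -> weakly_convex rho g ->
  is_argmin (fun y => g y + (q * enorm (y - c) ^+ 2)%:E) ys ->
  g z < +oo ->
  g ys < +oo /\
  (fine (g ys) + q * edot (ys - c) (ys - c) + (q - rho / 2) * edot (z - ys) (z - ys)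
   <= fine (g z) + q * edot (z - c) (z - c))%R.
Proof.
move=> gfin wc am gz.
have [gzr Egz] : exists v, g z = v%:E.
  case E: (g z) => [v| |]; [by exists v | by rewrite E in gz | by have := gfin z; rewrite E].
have gys : g ys < +oo.
  have := am z; rewrite Egz -EFinD.
  case E: (g ys) => [v| |] //=; by rewrite leNgt ltry.
split => //.
have [gyr Egy] : exists v, g ys = v%:E.
  case E: (g ys) => [v| |]; [by exists v | by rewrite E in gys | by have := gfin ys; rewrite E].
rewrite Egz Egy /=.
set Z := edot (z - c) (z - c).
set Y := edot (ys - c) (ys - c).
set W := edot (z - ys) (z - ys).
suff : ((q - rho / 2) * W <= (gzr + q * Z) - (gyr + q * Y))%R by lra.
apply: lim_arg => t t0 t1.
have := wc z ys t ltac:(apply/andP; split; lra).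
rewrite /= Egz Egy -!EFinD.

case E: (g (t *: z + (1 - t) *: ys)%R) => [gt| |]; last first.
- by have := gfin (t *: z + (1 - t) *: ys)%R; rewrite E.
- by rewrite /= leNgt ltry.
rewrite -EFinD lee_fin => H1.
have := am (t *: z + (1 - t) *: ys)%R; rewrite /= E Egy -!EFinD lee_fin => H2.
rewrite !enorm_sq conv_id0 in H1.
rewrite !enorm_sq conv_id in H2.
set Z0 := edot z z in H1. set Y0 := edot ys ys in H1.
rewrite -/W in H1 H2.
have : (0 <= t * ((gzr + q * Z) - (gyr + q * Y + (q - rho / 2) * ((1 - t) * W))))%R.
  have -> : (t * ((gzr + q * Z) - (gyr + q * Y + (q - rho / 2) * ((1 - t) * W))) =
    (t * (gzr + rho / 2 * Z0) + (1 - t) * (gyr + rho / 2 * Y0) -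
      (gt + rho / 2 * (t * Z0 + (1 - t) * Y0 - t * (1 - t) * W))) +
    ((gt + q * (t * Z + (1 - t) * Y - t * (1 - t) * W)) - (gyr + q * Y)))%R by ring.
  apply: addr_ge0; rewrite subr_ge0 //.
rewrite (pmulr_rge0 _ t0) subr_ge0 mulrCA; lra.
Qed.


Local Close Scope ereal_scope.

Lemma cs_sum (s : seq nat) (w a : nat -> R) :
  (forall k, 0 <= w k) -> 0 < \sum_(k <- s) w k ->
  (\sum_(k <- s) w k * a k) ^+ 2 <=
  (\sum_(k <- s) w k) * \sum_(k <- s) w k * a k ^+ 2.
Proof.
move=> w0 W0.
set W := \sum_(k <- s) w k.
set A := \sum_(k <- s) w k * a k.
set B := \sum_(k <- s) w k * a k ^+ 2.
pose m := A / W.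
have H : 0 <= \sum_(k <- s) w k * (a k - m) ^+ 2.
  by apply: sumr_ge0 => k _; apply: mulr_ge0 => //; apply: sqr_ge0.
rewrite (eq_bigr (fun k => w k * a k ^+ 2 - 2 * m * (w k * a k) + m ^+ 2 * w k))
  in H; last by move=> k _; ring.
rewrite big_split sumrB /= -!mulr_sumr -/A -/B -/W in H.
have E : W * (B - 2 * m * A + m ^+ 2 * W) = W * B - A ^+ 2.
  by rewrite /m; field; rewrite gt_eqF.
have := mulr_ge0 (ltW W0) H; rewrite E subr_ge0 //.
Qed.

Lemma jensen_sq (s : seq nat) (w : nat -> R) (v : nat -> V) (p : V) :
  (forall k, 0 <= w k) -> 0 < \sum_(k <- s) w k ->
  edot ((\sum_(k <- s) w k)^-1 *: \sum_(k <- s) w k *: v k - p)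
       ((\sum_(k <- s) w k)^-1 *: \sum_(k <- s) w k *: v k - p) <=
  (\sum_(k <- s) w k)^-1 * \sum_(k <- s) w k * edot (v k - p) (v k - p).
Proof.
move=> w0 W0.
set W := \sum_(k <- s) w k.
have Wn : W != 0 by rewrite gt_eqF.
have ce : forall i, (W^-1 *: \sum_(k <- s) w k *: v k - p) ord0 i =
    W^-1 * \sum_(k <- s) w k * (v k ord0 i - p ord0 i).
  move=> i; rewrite !mxE summxE.
  rewrite [in RHS](eq_bigr (fun k => w k * v k ord0 i - w k * p ord0 i));
    last by move=> k _; rewrite mulrBr.
  rewrite sumrB -mulr_suml -/W mulrBr mulrA mulVf // mul1r.
  congr (_ * _ - _); apply: eq_bigr => k _; rewrite !mxE //.
rewrite /edot.
under eq_bigr => i _ do rewrite ce.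
rewrite [X in _ <= X](_ : _ = \sum_(i < d) W^-1 *
    \sum_(k <- s) w k * ((v k - p) ord0 i * (v k - p) ord0 i)); last first.
  rewrite -mulr_sumr; congr (_ * _); rewrite exchange_big /=.
  by apply: eq_bigr => k _; rewrite mulr_sumr.
apply: ler_sum => i _.
rewrite -expr2 exprMn.
have := @cs_sum s w (fun k => v k ord0 i - p ord0 i) w0 W0; rewrite -/W => H.
have -> : \sum_(k <- s) w k * ((v k - p) ord0 i * (v k - p) ord0 i) =
   \sum_(k <- s) w k * (v k ord0 i - p ord0 i) ^+ 2.
  by apply: eq_bigr => k _; rewrite !mxE expr2.
have Wi : 0 < W^-1 by rewrite invr_gt0.
rewrite expr2 -mulrA ler_pM2l //.
by rewrite -(ler_pM2l W0) mulrA mulfV // mul1r.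
Qed.

End Helpers.

Section Num.
Variable R : realType.

Lemma rec_step (c D0 n X Y : R) : 1 <= n -> 0 <= c -> 0 <= D0 ->
  (n + 5) * X <= (n + 1) * Y + c / (n + 1) ->
  Y <= 6 * D0 / ((n + 1) * (n + 2) * (n + 3)) + c / (2 * (n + 1)) ->
  X <= 6 * D0 / ((n + 2) * (n + 3) * (n + 4)) + c / (2 * (n + 2)).
Proof.
move=> n1 c0 D00 HX HY.
have p1 : 0 < n + 1 by lra.
have p2 : 0 < n + 2 by lra.
have p3 : 0 < n + 3 by lra.
have p4 : 0 < n + 4 by lra.
have p5 : 0 < n + 5 by lra.
have HY' : (n + 1) * Y <= 6 * D0 / ((n + 2) * (n + 3)) + c / 2.
  have := ler_wpM2l (ltW p1) HY.
  have -> : (n + 1) * (6 * D0 / ((n + 1) * (n + 2) * (n + 3)) + c / (2 * (n + 1)))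
     = 6 * D0 / ((n + 2) * (n + 3)) + c / 2.
    by field; rewrite !gt_eqF.
  done.
set RHS := 6 * D0 / ((n + 2) * (n + 3) * (n + 4)) + c / (2 * (n + 2)).
have E : (n + 5) * RHS - (6 * D0 / ((n + 2) * (n + 3)) + c / 2 + c / (n + 1)) =
   6 * D0 / ((n + 2) * (n + 3) * (n + 4)) + c * (n - 1) / (2 * (n + 1) * (n + 2)).
  by rewrite /RHS; field; rewrite !gt_eqF.
have G : 0 <= 6 * D0 / ((n + 2) * (n + 3) * (n + 4)) + c * (n - 1) / (2 * (n + 1) * (n + 2)).
  apply: addr_ge0; apply: divr_ge0; try apply: mulr_ge0; try lra;
    repeat apply: mulr_ge0; lra.
rewrite -(ler_pM2l p5); lra.
Qed.

Lemma step_real (al L N n Dp Dk : R) : 0 < al -> 0 <= N ->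
  let th := al / 2 * (N + 1) in
  (2 * al + th) / 2 * Dp + th / 2 * n ^+ 2 <= th / 2 * Dk + 2 * L * n ->
  (N + 5) * Dp <= (N + 1) * Dk + (16 * L ^+ 2 / al ^+ 2) / (N + 1).
Proof.
move=> al0 N0 th H.
have th0 : 0 < th by rewrite /th; apply: mulr_gt0; lra.
have Y : 2 * L * n <= th / 2 * n ^+ 2 + 2 * L ^+ 2 / th.
  have : 0 <= th / 2 * (n - 2 * L / th) ^+ 2.
    by apply: mulr_ge0; [lra | apply: sqr_ge0].
  have -> : th / 2 * (n - 2 * L / th) ^+ 2 =
     th / 2 * n ^+ 2 + 2 * L ^+ 2 / th - 2 * L * n.
    by field; rewrite gt_eqF.
  lra.
have H2 : (2 * al + th) / 2 * Dp <= th / 2 * Dk + 2 * L ^+ 2 / th by lra.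
have h4 : 0 < 4 / al by apply: divr_gt0; lra.
have := ler_wpM2l (ltW h4) H2.
have -> : 4 / al * ((2 * al + th) / 2 * Dp) = (N + 5) * Dp.
  by rewrite /th; field; rewrite gt_eqF.
have -> : 4 / al * (th / 2 * Dk + 2 * L ^+ 2 / th) =
   (N + 1) * Dk + (16 * L ^+ 2 / al ^+ 2) / (N + 1).
  have hN : 0 < N + 1 by lra.
  by rewrite /th; field; rewrite (gt_eqF al0) (gt_eqF hN).
done.
Qed.

Lemma base_real (al L n D1 D0 th : R) : 0 < al -> th = al / 2 -> 0 <= n ->
  D1 = n ^+ 2 -> 0 <= th / 2 * D0 ->
  (2 * al + th) / 2 * D1 <= th / 2 * D0 + 2 * L * n ->
  D1 <= 6 * D0 / (2 * 3 * 4) + (16 * L ^+ 2 / al ^+ 2) / (2 * 2).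
Proof.
move=> al0 -> n0 -> _ H.
have Y : 2 * L * n <= al / 4 * n ^+ 2 + 4 * L ^+ 2 / al.
  have : 0 <= al / 4 * (n - 4 * L / al) ^+ 2.
    by apply: mulr_ge0; [lra | apply: sqr_ge0].
  have -> : al / 4 * (n - 4 * L / al) ^+ 2 =
     al / 4 * n ^+ 2 + 4 * L ^+ 2 / al - 2 * L * n.
    by field; rewrite gt_eqF.
  lra.
have H2 : al * n ^+ 2 <= al / 4 * D0 + 4 * L ^+ 2 / al by lra.
have h4 : 0 < 1 / al by apply: divr_gt0; lra.
have := ler_wpM2l (ltW h4) H2.
have -> : 1 / al * (al * n ^+ 2) = n ^+ 2 by field; rewrite gt_eqF.
have -> : 1 / al * (al / 4 * D0 + 4 * L ^+ 2 / al) =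
  6 * D0 / (2 * 3 * 4) + (16 * L ^+ 2 / al ^+ 2) / (2 * 2)
  by field; rewrite gt_eqF.
done.
Qed.

Lemma sum_w (n : nat) :
  \sum_(1 <= k < n.+1) (k.+1)%:R = (n%:R * (n%:R + 3)) / 2 :> R.
Proof.
elim: n => [|n IH]; first by rewrite big_geq // mul0r mul0r.
by rewrite big_nat_recr //= IH -!natr1; field.
Qed.


Lemma sum_inv (Dj : nat -> R) (c D0 : R) (M : nat) : 0 <= c -> 0 <= D0 ->
  (forall j, (1 <= j <= M)%N ->
     Dj j <= 6 * D0 / ((j%:R + 1) * (j%:R + 2) * (j%:R + 3)) + c / (2 * (j%:R + 1))) ->
  forall n, (n <= M)%N ->
  \sum_(1 <= j < n.+1) (j.+1)%:R * Dj j <= (2 - 6 / (n%:R + 3)) * D0 + c * n%:R / 2.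
Proof.
move=> c0 D00 HD; elim=> [|n IH] hn.
  rewrite big_geq // mulr0 mul0r addr0.
  have -> : 2 - 6 / (0%:R + 3) = 0 :> R by field.
  by rewrite mul0r.
rewrite big_nat_recr //=.
have := IH (ltnW hn); have := HD n.+1 ltac:(by rewrite /= hn).
set N := n%:R.
have -> : n.+1%:R = N + 1 :> R by rewrite -natr1.
have -> : n.+2%:R = N + 2 :> R by rewrite /N -!natr1; ring.
move=> H1 H2.
have N0 : 0 <= N by apply: ler0n.
have H1' : (N + 2) * Dj n.+1 <= 6 * D0 / ((N + 3) * (N + 4)) + c / 2.
  have := ler_wpM2l (_ : 0 <= N + 2) H1.
  have -> : (N + 2) * (6 * D0 / ((N + 1 + 1) * (N + 1 + 2) * (N + 1 + 3)) +
      c / (2 * (N + 1 + 1))) = 6 * D0 / ((N + 3) * (N + 4)) + c / 2.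
    by field; rewrite !gt_eqF //; lra.
  by apply; lra.
have E : (2 - 6 / (N + 3)) * D0 + c * N / 2 + (6 * D0 / ((N + 3) * (N + 4)) + c / 2)
   = (2 - 6 / (N + 1 + 3)) * D0 + c * (N + 1) / 2.
  by field; rewrite !gt_eqF //; lra.
rewrite -E; lra.
Qed.

Lemma final_arith (N a b mu rho L D0 e0 X : R) :
  0 < a -> 0 < b -> 0 < mu -> 0 < rho -> mu < rho^-1 -> 0 <= N -> 0 <= e0 ->
  D0 = e0 ^+ 2 ->
  4 / a + 16 * L ^+ 2 / ((1 - mu * rho) ^+ 2 * b ^+ 2) <= N ->
  X <= ((N + 1) * (N + 4) / 2)^-1 *
       (2 * D0 + 16 * L ^+ 2 / (mu^-1 - rho) ^+ 2 * (N + 1) / 2) ->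
  X <= (a * e0 + mu * b) ^+ 2.
Proof.
move=> a0 b0 mu0 rho0 murho N0 e00 -> hK HX.
have mr : mu * rho < 1.
  by rewrite -(mulVf (lt0r_neq0 rho0)) ltr_pM2r.
have al : mu^-1 - rho = (1 - mu * rho) / mu by field; rewrite gt_eqF.
have q0 : 0 < (1 - mu * rho) ^+ 2 * b ^+ 2.
  by apply: mulr_gt0; apply: exprn_gt0; lra.
have t1 : 0 <= 16 * L ^+ 2 / ((1 - mu * rho) ^+ 2 * b ^+ 2).
  by apply: divr_ge0; [apply: mulr_ge0 => //; apply: sqr_ge0 | lra].
have aN : 4 <= a * N.
  have : 4 / a <= N by lra.
  by rewrite ler_pdivrMr // mulrC.
have LN : 16 * L ^+ 2 <= N * ((1 - mu * rho) ^+ 2 * b ^+ 2).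
  have : 16 * L ^+ 2 / ((1 - mu * rho) ^+ 2 * b ^+ 2) <= N.
    have : 0 <= 4 / a by apply: divr_ge0; lra.
    lra.
  by rewrite ler_pdivrMr.
rewrite al in HX.
have E : ((N + 1) * (N + 4) / 2)^-1 *
       (2 * e0 ^+ 2 + 16 * L ^+ 2 / ((1 - mu * rho) / mu) ^+ 2 * (N + 1) / 2) =
       4 / ((N + 1) * (N + 4)) * e0 ^+ 2 +
       (16 * L ^+ 2 * mu ^+ 2 / (1 - mu * rho) ^+ 2) / (N + 4).
  field; rewrite !gt_eqF //; try lra.
rewrite E in HX.
have i1 : 4 / ((N + 1) * (N + 4)) <= a ^+ 2.
  rewrite ler_pdivrMr; last by apply: mulr_gt0; lra.
  nra.
have i2 : (16 * L ^+ 2 * mu ^+ 2 / (1 - mu * rho) ^+ 2) / (N + 4) <= (mu * b) ^+ 2.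
  rewrite ler_pdivrMr; last by lra.
  rewrite ler_pdivrMr; last by apply: exprn_gt0; lra.
  have : 0 <= mu ^+ 2 by apply: sqr_ge0.
  nra.
have i3 : 0 <= a * e0 * (mu * b).
  by apply: mulr_ge0; apply: mulr_ge0; lra.
have i4 : 4 / ((N + 1) * (N + 4)) * e0 ^+ 2 <= a ^+ 2 * e0 ^+ 2.
  by apply: ler_wpM2r => //; apply: sqr_ge0.
rewrite sqrrD exprMn; lra.
Qed.

End Num.

Local Open Scope ereal_scope.

Theorem mainTheorem8 (R : realType) (d : nat)
  (l : 'rV[R]_d -> R) (r : 'rV[R]_d -> \bar R) (lm : 'rV[R]_d -> 'rV[R]_d -> R)
  (L rho mu a b : R) (x0 : 'rV[R]_d) (K : nat)
  (x : nat -> 'rV[R]_d) (p : 'rV[R]_d) :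
  proper_fun r ->
  weakly_convex rho (addfe l r) ->
  one_sided_model l r lm 0 L rho ->
  (0 < rho)%R -> (0 < mu)%R -> (mu < rho^-1)%R ->
  (0 < a)%R -> (0 < b)%R ->
  x 0%N = x0 ->
  (forall k : nat, (k <= K)%N ->
     let theta := ((mu^-1 - rho) / 2 * (k.+1)%:R)%R in
     is_argmin (fun y => addfe (lm (x k)) r y +
        ((1 + theta * mu) / (2 * mu) *
          enorm (y - (1 + theta * mu)^-1 *: (x0 + (theta * mu) *: x k)) ^+ 2)%:E)
       (x k.+1)) ->
  is_prox mu (addfe l r) x0 p ->
  (4 / a + 16 * L ^+ 2 / ((1 - mu * rho) ^+ 2 * b ^+ 2) <= K%:R)%R ->
  let xbar := ((2 / ((K.+2 * K.+3)%:R - 2)) *: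
                 \sum_(1 <= k < K.+2) (k.+1)%:R *: x k)%R in
  (enorm (xbar - p) <= a * enorm (x0 - p) + mu * b)%R.
Proof.
move=> [rfin [z0 rz0]] wcf [_ [_ hm]] rho0 mu0 murho a0 b0 Ex0 hstep hprox hK.
cbv zeta.
have mr : (mu * rho < 1)%R by rewrite -(mulVf (lt0r_neq0 rho0)) ltr_pM2r.
have al0 : (0 < mu^-1 - rho)%R.
  have -> : (mu^-1 - rho = (1 - mu * rho) / mu)%R by field; rewrite gt_eqF.
  by apply: divr_gt0 => //; lra.
have gfin : forall h y, -oo < addfe h r y.
  move=> h y; rewrite /addfe; have := rfin y.
  by case: (r y) => [v| |] //= _; rewrite ?ltNyr.
have fin_r : forall y, r y < +oo -> r y = (fine (r y))%:E.
  move=> y; have := rfin y; by case: (r y).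
have addfe_lt : forall h y, r y < +oo -> addfe h r y < +oo.
  by move=> h y /fin_r ry; rewrite /addfe ry -EFinD ltry.
have addfe_lt' : forall h y, addfe h r y < +oo -> r y < +oo.
  move=> h y; rewrite /addfe; have := rfin y.
  by case: (r y) => [v| |] //= _; rewrite ?ltry.
have fine_addfe : forall h y, r y < +oo -> fine (addfe h r y) = (h y + fine (r y))%R.
  by move=> h y /fin_r ry; rewrite /addfe ry -EFinD /=.
set al := (mu^-1 - rho)%R.
have al0' : (0 < al)%R by exact: al0.
have mu0' : mu != 0%R by rewrite gt_eqF.
pose D j := edot (x j - p) (x j - p).
have rp : r p < +oo.
  have [h _] := @sc_min _ _ _ _ _ _ _ _ (gfin l) wcf hprox (addfe_lt l z0 rz0).
  exact: addfe_lt' h.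
have scphi : forall z, r z < +oo ->
  (l p + fine (r p) + 1 / (2 * mu) * edot (p - x0) (p - x0) + al / 2 * edot (z - p) (z - p)
   <= l z + fine (r z) + 1 / (2 * mu) * edot (z - x0) (z - x0))%R.
  move=> z rz; have [_ h] := @sc_min _ _ _ _ _ _ _ _ (gfin l) wcf hprox (addfe_lt l z rz).
  rewrite !fine_addfe // in h.
  have e : (1 / (2 * mu) - rho / 2 = al / 2)%R by rewrite /al; field.
  by rewrite e in h.
have key : forall k, (k <= K)%N -> r (x k.+1) < +oo /\
  ((2 * al + al / 2 * (k.+1)%:R) / 2 * D k.+1 +
     al / 2 * (k.+1)%:R / 2 * edot (x k.+1 - x k) (x k.+1 - x k)
   <= al / 2 * (k.+1)%:R / 2 * D k +
      ((l (x k.+1) - lm (x k) (x k.+1)) - (l p - lm (x k) p)))%R.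
  move=> k hk; have h := hstep k hk; cbv zeta in h.
  rewrite -/al in h.
  set th := (al / 2 * (k.+1)%:R)%R in h *.
  have hwc := (hm (x k)).2.2.2.
  have [rx' ineq] := @sc_min _ _ _ _ _ _ _ _ (gfin (lm (x k))) hwc h
                       (addfe_lt (lm (x k)) p rp).
  have rx : r (x k.+1) < +oo := addfe_lt' _ _ rx'.
  split => //.
  rewrite !fine_addfe // in ineq.
  have th0 : (0 < th)%R by rewrite /th; apply: mulr_gt0; [lra | apply: ltr0Sn].
  have s0 : (1 + th * mu != 0)%R.
    have : (0 < th * mu)%R := mulr_gt0 th0 mu0.
    move=> h0; have h1 : (0 < 1 + th * mu)%R by lra.
    by rewrite gt_eqF.
  rewrite !quad_split // in ineq.
  have hp := scphi _ rx.
  have e1 : (th * mu / (2 * mu) = th / 2)%R by field.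
  have e2 : ((1 + th * mu) / (2 * mu) - rho / 2 = (al + th) / 2)%R by rewrite /al; field.
  rewrite e1 e2 (@edot_opp _ _ p (x k.+1)) (@edot_opp _ _ p (x k)) in ineq.
  rewrite /D; lra.
have lipb : forall y y1 z1, r y1 < +oo -> r z1 < +oo ->
    (lm y y1 - lm y z1 <= L * enorm (y1 - z1))%R.
  move=> y y1 z1 h1 h2; have := (hm y).1 y1 z1 h1 h2.
  by apply: le_trans; exact: ler_norm.
have tau : forall y y1, (lm y y1 <= l y1)%R.
  by move=> y y1; have := (hm y).2.2.1 y1; rewrite mul0r subr_le0.
have diag : forall y, lm y y = l y by move=> y; exact: (hm y).2.1.
have err1 : forall k, r (x k) < +oo -> r (x k.+1) < +oo ->
  ((l (x k.+1) - lm (x k) (x k.+1)) - (l p - lm (x k) p)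
     <= 2 * L * enorm (x k.+1 - x k))%R.
  move=> k rx rx'.
  have h1 := lipb (x k.+1) (x k.+1) (x k) rx' rx; rewrite diag in h1.
  have h2 := tau (x k.+1) (x k).
  have h3 := lipb (x k) (x k) (x k.+1) rx rx'.
  rewrite diag (@enormB _ _ (x k) (x k.+1)) in h3.
  have h4 := tau (x k) p.
  lra.
have err0 : r (x 1%N) < +oo ->
  ((l (x 1%N) - lm (x 0%N) (x 1%N)) - (l p - lm (x 0%N) p)
     <= 2 * L * enorm (x 1%N - p))%R.
  move=> rx1.
  have h1 := lipb (x 1%N) (x 1%N) p rx1 rp; rewrite diag in h1.
  have h2 := tau (x 1%N) p.
  have h3 := lipb (x 0%N) p (x 1%N) rp rx1.
  rewrite (@enormB _ _ p (x 1%N)) in h3.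
  lra.
set c := (16 * L ^+ 2 / al ^+ 2)%R.
have c0 : (0 <= c)%R.
  by rewrite /c; apply: divr_ge0; [apply: mulr_ge0 => //; apply: sqr_ge0 | apply: sqr_ge0].
have D0ge : (0 <= D 0%N)%R by rewrite /D; apply: edot_ge0.
have inv : forall j, (1 <= j <= K.+1)%N ->
  (D j <= 6 * D 0%N / ((j%:R + 1) * (j%:R + 2) * (j%:R + 3)) + c / (2 * (j%:R + 1)))%R.
  elim=> [|j IH] // hj.
  case: j IH hj => [|j] IH hj.
    have [rx1 k0] := key 0%N (leq0n K).
    have e0 := err0 rx1.
    have e1 : (al / 2 * 1%:R = al / 2)%R by rewrite mulr1n mulr1.
    rewrite e1 in k0.
    have hb := @base_real _ al L (enorm (x 1%N - p)%R) (D 1%N) (D 0%N) (al / 2)%R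
      al0' erefl (@enorm_ge0 _ _ _) (esym (@enorm_sq _ _ _))
      ltac:(by apply: mulr_ge0 => //; lra).
    have E : (6 * D 0%N / (2 * 3 * 4) + c / (2 * 2) =
      6 * D 0%N / ((1%:R + 1) * (1%:R + 2) * (1%:R + 3)) + c / (2 * (1%:R + 1)))%R.
      by field.
    rewrite -E; apply: hb.
    have := @edot_ge0 _ _ (x 1%N - x 0%N)%R.
    have : (0 <= al / 2 / 2)%R by lra.
    move=> h5 h6; have := mulr_ge0 h5 h6; lra.
  have hk : (j.+1 <= K)%N by [].
  have [rx' kk] := key j.+1 hk.
  have [rxk _] := key j (ltnW hk).
  have ee := err1 j.+1 rxk rx'.
  set N := (j.+1)%:R : R.
  have N1 : (1 <= N)%R by rewrite /N ler1n.
  have hN : (j.+2)%:R = (N + 1)%R :> R by rewrite /N natr1.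
  rewrite hN in kk.
  rewrite -(@enorm_sq _ _ (x j.+2 - x j.+1)%R) in kk.
  have st := @step_real _ al L N (enorm (x j.+2 - x j.+1)%R) (D j.+2) (D j.+1)
     al0' ltac:(lra) ltac:(lra).
  have := @rec_step _ c (D 0%N) N (D j.+2) (D j.+1) N1 c0 D0ge st (IH ltac:(apply/andP; split => //; exact: leqW hk)).
  rewrite hN.
  have -> : (N + 1 + 1 = N + 2)%R by ring.
  have -> : (N + 1 + 2 = N + 3)%R by ring.
  have -> : (N + 1 + 3 = N + 4)%R by ring.
  done.
have sb := @sum_inv _ D c (D 0%N) K.+1 c0 D0ge inv K.+1 (leqnn _).
set N := K%:R : R.
have N0 : (0 <= N)%R by rewrite /N ler0n.
have hN1 : (K.+1)%:R = (N + 1)%R :> R by rewrite /N natr1.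
have hW : (\sum_(1 <= k < K.+2) (k.+1)%:R = (N + 1) * (N + 4) / 2 :> R)%R.
  by rewrite sum_w hN1; field.
have Wpos : (0 < \sum_(1 <= k < K.+2) (k.+1)%:R :> R)%R.
  by rewrite hW; apply: divr_gt0; [apply: mulr_gt0|]; lra.
have eS : (2 / ((K.+2 * K.+3)%:R - 2) = (\sum_(1 <= k < K.+2) (k.+1)%:R)^-1 :> R)%R.
  have e2 : (K.+2)%:R = (N + 2)%R :> R by rewrite /N -!natr1; ring.
  have e3 : (K.+3)%:R = (N + 3)%R :> R by rewrite /N -!natr1; ring.
  rewrite hW natrM e2 e3.
  have h1 : ((N + 2) * (N + 3) - 2 = (N + 1) * (N + 4))%R by ring.
  rewrite h1; field.
  by apply/andP; split; rewrite gt_eqF //; lra.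
rewrite eS.
have J := @jensen_sq _ _ (index_iota 1 K.+2) (fun k => (k.+1)%:R) x p
   (fun k => ler0n _ _) Wpos.
cbv beta in J.
set xb := ((\sum_(1 <= k < K.+2) k.+1%:R)^-1 *: \sum_(1 <= k < K.+2) k.+1%:R *: x k)%R.
have X2 : (enorm (xb - p)%R ^+ 2 <= ((N + 1) * (N + 4) / 2)^-1 *
       (2 * D 0%N + c * (N + 1) / 2))%R.
  rewrite enorm_sq; apply: le_trans J _.
  rewrite hW; apply: ler_wpM2l.
    by rewrite invr_ge0; apply: divr_ge0 => //; apply: mulr_ge0; lra.
  apply: le_trans sb _; rewrite hN1.
  have : (0 <= 6 / (N + 1 + 3) * D 0%N)%R.
    by apply: mulr_ge0 => //; apply: divr_ge0; lra.
  lra.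
have D0eq : D 0%N = (enorm (x0 - p)%R ^+ 2)%R by rewrite /D Ex0 enorm_sq.
have fa := @final_arith _ N a b mu rho L (D 0%N) (enorm (x0 - p)%R)
  (enorm (xb - p)%R ^+ 2)%R a0 b0 mu0 rho0 murho N0 (@enorm_ge0 _ _ _) D0eq hK X2.
rewrite -(@ler_pXn2r _ 2) // ?nnegrE ?enorm_ge0 //.
have he := @enorm_ge0 _ _ (x0 - p)%R.
have := mulr_ge0 (ltW a0) he; have := mulr_ge0 (ltW mu0) (ltW b0); lra.
Qed.
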